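(* Let $\mu$ be a probability measure on $\mathbb T^d$, $\varepsilon>0$, and let $\alpha,R>0$ be constants such that $x\mapsto\mathrm{dist}(0_d,x)^2$ is $\alpha$-strongly convex on $B_{\mathbb T^d}(0_d,R)$. Let $x_0\in\mathbb T^d$, $r<R$, $Q=B_{\mathbb T^d}(x_0,r)$, and let $\nu$ be a probability density with $\nu(x)\in[m_\nu,M_\nu]$ for $x\in Q$ ($0<m_\nu\le M_\nu$); set $\nu_Q=\nu1_Q/\nu(Q)$. Let $\gamma_Q(x)=Z_Q^{-1}e^{-\frac1\alpha\mathrm{dist}(x_0,x)^2}1_Q(x)$ with $Z_Q=\int_Qe^{-\frac1\alpha\mathrm{dist}(x_0,x)^2}dx$, and for $\phi\in\mathcal C(\mathbb T^d)$ let $\gamma_Q[\phi](y)=\frac{\gamma_Q(y)e^{\mathcal T^\varepsilon_\mu[\phi](y)}}{\int_Qe^{\mathcal T^\varepsilon_\mu[\phi]}d\gamma_Q}$. Then for every $\phi\in\mathcal C(\mathbb T^d)$ and $y\in Q$, $$m_\nu e^{-\frac{r^2}{\alpha}-4\pi^2d}\cdot\frac{\mathrm{vol}(Q)}{\nu(Q)}\le\frac{\nu_Q(y)}{\gamma_Q[\phi](y)}\le M_\nu e^{\frac{r^2}{\alpha}+4\pi^2d}\cdot\frac{\mathrm{vol}(Q)}{\nu(Q)}.$$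
   Context: $\mathbb T^d=\mathbb R^d/2\pi\mathbb Z^d$ with $\mathrm{dist}(x,y)=\min_{k\in\mathbb Z^d}\|x-y-2\pi k\|$, $B_{\mathbb T^d}(x,r)$ the open ball, $\mathrm{vol}$ Lebesgue measure. $\alpha$-strong convexity on a geodesically convex set is defined along geodesic interpolants: $f(z)\le(1-\lambda)f(x_0)+\lambda f(x_1)-\frac{\alpha\lambda(1-\lambda)}2\mathrm{dist}(x_0,x_1)^2$ whenever $\mathrm{dist}(z,x_0)=\lambda\mathrm{dist}(x_0,x_1)$, $\mathrm{dist}(z,x_1)=(1-\lambda)\mathrm{dist}(x_0,x_1)$. $\mathcal K_\varepsilon(x)=(2\pi\varepsilon)^{-d/2}\sum_{k}e^{-\|x-2\pi k\|^2/(2\varepsilon)}$, $c_\varepsilon(x,y)=-\varepsilon\log\mathcal K_\varepsilon(x-y)$, $\mathcal T^\varepsilon_\mu[\phi](y)=-\varepsilon\log\int e^{(\phi(x)-c_\varepsilon(x,y))/\varepsilon}d\mu(x)$. *)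

(* Defs.v *)
From HB Require Import structures.
From mathcomp Require Import all_boot all_order all_algebra.
From mathcomp Require Import all_classical all_reals all_analysis.
Set Implicit Arguments. Unset Strict Implicit. Unset Printing Implicit Defensive.
Import Order.TTheory GRing.Theory Num.Theory.
Import numFieldNormedType.Exports.
Local Open Scope classical_set_scope.
Local Open Scope ring_scope.

(* Points of the torus T^d = R^d / 2piZ^d are represented by their lifts,
   i.e. by points of R^d, encoded as d.-tuple R (which carries the product
   Borel sigma-algebra in MathComp-Analysis).  Functions/sets on T^d are
   2pi-torus_periodic functions/sets on R^d. *)
Section Torus.
Variable R : realType.

Definition sqnorm_shift d (x y : d.-tuple R) (k : {ffun 'I_d -> int}) : R :=
  \sum_(i < d) (tnth x i - tnth y i - 2 * pi * (k i)%:~R) ^+ 2.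

Definition tdist d (x y : d.-tuple R) : R :=
  inf [set Num.sqrt (sqnorm_shift x y k) | k in [set: {ffun 'I_d -> int}]].

Definition tball d (x : d.-tuple R) (r : R) : set (d.-tuple R) :=
  [set y | tdist x y < r].

Definition torigin d : d.-tuple R := [tuple (0 : R) | i < d].

Definition same_point d (x y : d.-tuple R) : Prop :=
  forall i : 'I_d, exists k : int, tnth x i - tnth y i = 2 * pi * k%:~R.

Definition torus_periodic d (f : d.-tuple R -> R) : Prop :=
  forall x y, same_point x y -> f x = f y.

Definition torus_continuous d (f : d.-tuple R -> R) : Prop :=
  torus_periodic f /\
  forall (x : d.-tuple R) (e : R), 0 < e -> exists2 delta : R, 0 < delta &
    forall y : d.-tuple R, (forall i, `|tnth x i - tnth y i| < delta) ->
      `|f x - f y| < e.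

(* alpha-strong convexity along geodesic interpolants on S *)
Definition strongly_convex_on d (S : set (d.-tuple R)) (f : d.-tuple R -> R)
    (alpha : R) : Prop :=
  forall (x0 x1 z : d.-tuple R) (l : R), S x0 -> S x1 -> 0 <= l <= 1 ->
    tdist z x0 = l * tdist x0 x1 -> tdist z x1 = (1 - l) * tdist x0 x1 ->
    f z <= (1 - l) * f x0 + l * f x1
           - alpha * l * (1 - l) / 2 * tdist x0 x1 ^+ 2.

(* Lebesgue integral over T^d of a nonnegative (extended-real) function,
   computed as the iterated integral over the fundamental domain
   [0, 2pi)^d (equal to the product-Lebesgue integral by Tonelli). *)
Fixpoint tint (n : nat) : (n.-tuple R -> \bar R) -> \bar R :=
  match n return (n.-tuple R -> \bar R) -> \bar R with
  | 0 => fun f => f [tuple]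
  | n'.+1 => fun f =>
      (\int[lebesgue_measure]_(t in `[0%R, (2 * pi)%R[%classic)
          tint (fun x : n'.-tuple R => f (cons_tuple t x)))%E
  end.

Definition tintegral d (A : set (d.-tuple R)) (f : d.-tuple R -> R) : R :=
  fine (tint (fun x => (f x * \1_A x)%:E)).

Definition tvol d (A : set (d.-tuple R)) : R := tintegral A (fun _ => 1).

Definition Kheat d (eps : R) (x : d.-tuple R) : R :=
  powR (2 * pi * eps) (- (d%:R / 2)) *
  fine (\esum_(k in [set: {ffun 'I_d -> int}])
          (expR (- sqnorm_shift x (torigin d) k / (2 * eps)))%:E)%E.

Definition tdiff d (x y : d.-tuple R) : d.-tuple R :=
  [tuple tnth x i - tnth y i | i < d].

Definition ceps d (eps : R) (x y : d.-tuple R) : R :=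
  - eps * ln (Kheat eps (tdiff x y)).

Definition Teps d (mu : probability (d.-tuple R) R) (eps : R)
    (phi : d.-tuple R -> R) (y : d.-tuple R) : R :=
  - eps * ln (fine (\int[mu]_x (expR ((phi x - ceps eps x y) / eps))%:E)%E).

Definition gammaQ d (alpha : R) (x0 : d.-tuple R) (r : R) (x : d.-tuple R) : R :=
  let Q := tball x0 r in
  let ZQ := tintegral Q (fun z => expR (- (tdist x0 z ^+ 2) / alpha)) in
  ZQ^-1 * expR (- (tdist x0 x ^+ 2) / alpha) * \1_Q x.

Definition gammaQphi d (mu : probability (d.-tuple R) R) (eps alpha : R)
    (x0 : d.-tuple R) (r : R) (phi : d.-tuple R -> R) (y : d.-tuple R) : R :=
  let Q := tball x0 r in
  gammaQ alpha x0 r y * expR (Teps mu eps phi y) /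
  tintegral Q (fun x => expR (Teps mu eps phi x) * gammaQ alpha x0 r x).

End Torus.

(* Main.v *)
Require Import Defs.
From HB Require Import structures.
From mathcomp Require Import all_boot all_order all_algebra.
From mathcomp Require Import all_classical all_reals all_analysis.
From mathcomp Require Import ring lra.
Import Order.TTheory GRing.Theory Num.Theory.
Import numFieldNormedType.Exports.
Local Open Scope classical_set_scope.
Local Open Scope ring_scope.
Set Implicit Arguments. Unset Strict Implicit. Unset Printing Implicit Defensive.
Import HBNNSimple.

Lemma my_le_integral (dd : measure_display) (T : measurableType dd) (R : realType)
  (mu : {measure set T -> \bar R}) (D : set T) (f g : T -> \bar R) :
  (forall x, D x -> (0 <= f x)%E) -> (forall x, D x -> (f x <= g x)%E) ->
  (\int[mu]_(x in D) f x <= \int[mu]_(x in D) g x)%E.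
Proof.
move=> f0 fg.
have g0 : forall x, D x -> (0 <= g x)%E by move=> x Dx; exact: le_trans (f0 x Dx) (fg x Dx).
rewrite !ge0_integralE//; apply: le_ereal_sup => _ [h hf <-]; exists h => //= x.
exact: le_trans (hf x) (lee_restrict fg x).
Qed.

Lemma my_integralZ_ge (dd : measure_display) (T : measurableType dd) (R : realType)
  (mu : {measure set T -> \bar R}) (D : set T) (f : T -> \bar R) (k : R) :
  0 < k -> (forall x, D x -> (0 <= f x)%E) ->
  (k%:E * \int[mu]_(x in D) f x <= \int[mu]_(x in D) (k%:E * f x))%E.
Proof.
move=> k0 f0.
have kf0 : forall x, D x -> (0 <= k%:E * f x)%E.
  by move=> x Dx; apply: mule_ge0; [rewrite lee_fin ltW | exact: f0].
rewrite !ge0_integralE// -ereal_sup_pZl//; apply: le_ereal_sup.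
move=> _ [_ [h hf <-] <-].
exists (scale_nnsfun h (ltW k0)).
  move=> x /=; have := hf x; rewrite /patch; case: ifP => _ hfx.
    by rewrite EFinM; apply: lee_wpmul2l; [rewrite lee_fin ltW | exact hfx].
  move: hfx; change (point : \bar R) with (0%R : \bar R)%E; rewrite !lee_fin => hx.
  by rewrite mulr_ge0_le0// ltW.
by rewrite -sintegralrM.
Qed.
Definition Eth (R : realType) (d : nat) (eps : R) (x : d.-tuple R) : \bar R :=
  (\esum_(k in [set: {ffun 'I_d -> int}])
     (expR (- sqnorm_shift x (torigin R d) k / (2 * eps)))%:E)%E.

Lemma Kheat_Eth (R : realType) (d : nat) (eps : R) (x : d.-tuple R) :
  Kheat eps x = powR (2 * pi * eps) (- (d%:R / 2)) * fine (Eth eps x).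
Proof. by []. Qed.

Lemma esumZ (R : realType) (T : choiceType) (I : set T) (a : T -> \bar R) (c : R) :
  0 <= c -> (forall i, (0 <= a i)%E) ->
  (\esum_(i in I) (c%:E * a i) = c%:E * \esum_(i in I) a i)%E.
Proof.
move=> c0 a0; rewrite /esum -ereal_supZl//; last first.
  by apply/set0P; exists 0%E; exists set0; [exact: fsets_set0 | exact: fsbig_set0].
congr ereal_sup; apply/seteqP; split.
  move=> _ [X HX <-]; exists (\sum_(x \in X) a x)%E; first by exists X.
  by rewrite ge0_mule_fsumr.
move=> _ [_ [X HX <-] <-]; exists X => //.
by rewrite ge0_mule_fsumr.
Qed.

Lemma sqnorm_torigin (R : realType) (d : nat) (x : d.-tuple R) k :
  sqnorm_shift x (torigin R d) k = \sum_(i < d) (tnth x i - 2 * pi * (k i)%:~R) ^+ 2.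
Proof. by apply: eq_bigr => i _; rewrite /torigin tnth_mktuple subr0. Qed.

Lemma Eth_shift (R : realType) (d : nat) (eps : R) (x x' : d.-tuple R)
  (j : {ffun 'I_d -> int}) :
  (forall i, tnth x' i = tnth x i + 2 * pi * (j i)%:~R) -> Eth eps x' = Eth eps x.
Proof.
move=> hx; rewrite /Eth.
pose e : {ffun 'I_d -> int} -> {ffun 'I_d -> int} := fun k => [ffun i => k i + j i].
have be : set_bij [set: {ffun 'I_d -> int}] [set: {ffun 'I_d -> int}] e.
  rewrite (setTT_bijective e); exists (fun k : {ffun 'I_d -> int} => [ffun i => k i - j i]) => k.
    by apply/ffunP => i; rewrite !ffunE addrK.
  by apply/ffunP => i; rewrite !ffunE subrK.
rewrite (@reindex_esum _ _ _ setT setT e _ be); apply: eq_esum => k _.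
suff -> : sqnorm_shift x' (torigin R d) (e k) = sqnorm_shift x (torigin R d) k by [].
rewrite !sqnorm_torigin; apply: eq_bigr => i _.
by rewrite hx ffunE intrD; congr (_ ^+ 2); ring.
Qed.

Definition setc (R : realType) (d : nat) (a : d.-tuple R) (i : 'I_d) (q : R) : d.-tuple R :=
  [tuple if j == i then q else tnth a j | j < d].

Lemma tnth_setc (R : realType) (d : nat) (a : d.-tuple R) i q j :
  tnth (setc a i q) j = if j == i then q else tnth a j.
Proof. by rewrite tnth_mktuple. Qed.

Lemma sq_split (R : realType) (d : nat) (a : d.-tuple R) i k :
  sqnorm_shift a (torigin R d) k = (tnth a i - 2 * pi * (k i)%:~R) ^+ 2 +
    \sum_(j < d | j != i) (tnth a j - 2 * pi * (k j)%:~R) ^+ 2.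
Proof. by rewrite sqnorm_torigin (bigD1 i). Qed.

Lemma sq_setc (R : realType) (d : nat) (a : d.-tuple R) i q k :
  sqnorm_shift (setc a i q) (torigin R d) k = (q - 2 * pi * (k i)%:~R) ^+ 2 +
    \sum_(j < d | j != i) (tnth a j - 2 * pi * (k j)%:~R) ^+ 2.
Proof.
rewrite (sq_split _ i) tnth_setc eqxx; congr (_ + _).
by apply: eq_bigr => j /negbTE hj; rewrite tnth_setc hj.
Qed.

Lemma expR_conv (R : realType) (l U V : R) : 0 <= l -> l <= 1 ->
  expR ((1 - l) * U + l * V) <= (1 - l) * expR U + l * expR V.
Proof.
move=> l0 l1; set W := (1 - l) * U + l * V.
have hU : expR W * (1 + (U - W)) <= expR U.
  have -> : expR U = expR W * expR (U - W) by rewrite -expRD addrC subrK.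
  by rewrite ler_wpM2l ?expR_ge0// expR_ge1Dx.
have hV : expR W * (1 + (V - W)) <= expR V.
  have -> : expR V = expR W * expR (V - W) by rewrite -expRD addrC subrK.
  by rewrite ler_wpM2l ?expR_ge0// expR_ge1Dx.
have -> : expR W = (1 - l) * (expR W * (1 + (U - W))) + l * (expR W * (1 + (V - W))).
  by rewrite /W; ring.
by apply: lerD; apply: ler_wpM2l => //; rewrite subr_ge0.
Qed.

Lemma Eth_step (R : realType) (d : nat) (eps : R) (a : d.-tuple R) i q :
  0 < eps ->
  (Eth eps a <= (expR (pi ^+ 2 / (2 * eps)))%:E * Eth eps (setc a i q))%E.
Proof.
move=> heps.
have pi0 : 0 < pi :> R := pi_gt0 R.
have pi20 : 0 < 2 * pi :> R by rewrite mulr_gt0.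
set m := Num.floor ((tnth a i - q) / (2 * pi)).
set p := q + 2 * pi * m%:~R.
set l := (tnth a i - p) / (2 * pi).
have hm1 : m%:~R <= (tnth a i - q) / (2 * pi) by exact: Num.Theory.floor_le.
have hm2 : (tnth a i - q) / (2 * pi) < (m + 1)%:~R by exact: Num.Theory.floorD1_gt.
rewrite intrD in hm2.
rewrite ler_pdivlMr// in hm1.
rewrite ltr_pdivrMr// in hm2.
have l0 : 0 <= l.
  by rewrite /l /p divr_ge0 ?(ltW pi20)//; nra.
have l1 : l <= 1.
  rewrite /l /p ler_pdivrMr// mul1r.
  move: hm2; rewrite mulrDl mul1r [_ * (2 * pi)]mulrC; lra.
have hai : tnth a i = p + 2 * pi * l.
  by rewrite /l mulrC divfK ?gt_eqF// addrC subrK.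
have E0 : Eth eps (setc a i p) = Eth eps (setc a i q).
  apply: (@Eth_shift _ _ eps _ _ [ffun t => if t == i then m else 0]) => t.
  by rewrite !tnth_setc ffunE; case: (t == i); rewrite ?mulr0 ?addr0.
have E1 : Eth eps (setc a i (p + 2 * pi)) = Eth eps (setc a i p).
  apply: (@Eth_shift _ _ eps _ _ [ffun t => if t == i then 1 else 0]) => t.
  by rewrite !tnth_setc ffunE; case: (t == i); rewrite ?mulr0 ?addr0 ?mulr1.
clearbody l.
set dl := l * (1 - l) * (4 * pi ^+ 2) / (2 * eps).
have dle : dl <= pi ^+ 2 / (2 * eps).
  rewrite /dl ler_pM2r ?invr_gt0 ?mulr_gt0//.
  have : 0 <= (2 * l - 1) ^+ 2 by exact: sqr_ge0.
  have : 0 <= pi ^+ 2 :> R by exact: sqr_ge0.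
  nra.
have hterm : forall k, ((expR (- sqnorm_shift a (torigin R d) k / (2 * eps)))%:E <=
   (expR dl * (1 - l))%:E * (expR (- sqnorm_shift (setc a i p) (torigin R d) k / (2 * eps)))%:E +
   (expR dl * l)%:E * (expR (- sqnorm_shift (setc a i (p + 2 * pi)) (torigin R d) k / (2 * eps)))%:E)%E.
  move=> k; rewrite -!EFinM -EFinD lee_fin.
  rewrite (sq_split _ i) !sq_setc hai.
  set rest := \sum_(j < d | j != i) _.
  set u := p - 2 * pi * (k i)%:~R.
  have -> : - ((p + 2 * pi * l - 2 * pi * (k i)%:~R) ^+ 2 + rest) / (2 * eps) =
     dl + ((1 - l) * (- (u ^+ 2 + rest) / (2 * eps)) +
           l * (- ((p + 2 * pi - 2 * pi * (k i)%:~R) ^+ 2 + rest) / (2 * eps))).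
    by rewrite /dl /u; field; rewrite gt_eqF.
  rewrite expRD -!mulrA -mulrDr ler_wpM2l ?expR_ge0//.
  exact: (expR_conv _ _ l0 l1).
apply: (le_trans (le_esum (fun k _ => hterm k))).
rewrite esumD; last 2 first.
- move=> k _; rewrite -EFinM lee_fin; apply: mulr_ge0; last exact: expR_ge0.
  by apply: mulr_ge0; rewrite ?expR_ge0 ?subr_ge0.
- move=> k _; rewrite -EFinM lee_fin; apply: mulr_ge0; last exact: expR_ge0.
  by apply: mulr_ge0; rewrite ?expR_ge0.
rewrite esumZ; last 2 first.
- by apply: mulr_ge0; rewrite ?expR_ge0 ?subr_ge0.
- by move=> k; rewrite lee_fin expR_ge0.
rewrite esumZ; last 2 first.
- by apply: mulr_ge0; rewrite ?expR_ge0 ?subr_ge0.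
- by move=> k; rewrite lee_fin expR_ge0.
rewrite -/(Eth eps _) -/(Eth eps _) E1 E0 -ge0_muleDl ?lee_fin ?mulr_ge0 ?expR_ge0 ?subr_ge0//.
rewrite -EFinD -mulrDr subrK mulr1.
apply: lee_wpmul2r; first by apply: esum_ge0 => k _; rewrite lee_fin expR_ge0.
by rewrite lee_fin ler_expR.
Qed.

Definition mixt (R : realType) (d : nat) (a b : d.-tuple R) (n : nat) : d.-tuple R :=
  [tuple if (j < n)%N then tnth b j else tnth a j | j < d].

Lemma Eth_chain (R : realType) (d : nat) (eps : R) (a b : d.-tuple R) n :
  0 < eps -> (n <= d)%N ->
  (Eth eps a <= (expR (n%:R * (pi ^+ 2 / (2 * eps))))%:E * Eth eps (mixt a b n))%E.
Proof.
move=> heps; elim: n => [_|n IH hn].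
  have -> : mixt a b 0 = a by apply: eq_from_tnth => j; rewrite tnth_mktuple.
  by rewrite mul0r expR0 mul1e.
have hn' : (n < d)%N by [].
apply: (le_trans (IH (ltnW hn))).
have := Eth_step (mixt a b n) (Ordinal hn') (tnth b (Ordinal hn')) heps.
have -> : setc (mixt a b n) (Ordinal hn') (tnth b (Ordinal hn')) = mixt a b n.+1.
  apply: eq_from_tnth => j; rewrite tnth_setc !tnth_mktuple.
  case: eqP => [->|hj] /=; first by rewrite ltnSn.
  have hjn : nat_of_ord j != n by apply/eqP => hjn; apply: hj; apply: val_inj.
  by have -> : (j < n.+1)%N = (j < n)%N by rewrite ltnS leq_eqVlt (negbTE hjn).
move=> h; apply: (le_trans (lee_wpmul2l _ h)); first by rewrite lee_fin expR_ge0.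
set c := pi ^+ 2 / (2 * eps).
have -> : n.+1%:R * c = n%:R * c + c by rewrite -natr1 mulrDl mul1r.
by rewrite muleA -EFinM -expRD.
Qed.

Lemma Eth_cmp (R : realType) (d : nat) (eps : R) (a b : d.-tuple R) :
  0 < eps ->
  (Eth eps a <= (expR (d%:R * (pi ^+ 2 / (2 * eps))))%:E * Eth eps b)%E.
Proof.
move=> heps; have := Eth_chain a b heps (leqnn d).
have -> // : mixt a b d = b.
by apply: eq_from_tnth => j; rewrite tnth_mktuple ltn_ord.
Qed.

Lemma ln_fine_cmp (R : realType) (A B : \bar R) (c : R) : 0 < c -> c <= 1 ->
  (0 <= A)%E -> (0 <= B)%E -> (c%:E * A <= B)%E -> (c%:E * B <= A)%E ->
  ln (fine A) <= ln (fine B) - ln c.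
Proof.
move=> c0 c1 A0 B0 hAB hBA.
have lnc : ln c <= 0 by exact: ln_le0.
case: A A0 hAB hBA => [a| |] //= A0 hAB hBA; last first.
  move: hAB; rewrite gt0_muley ?lte_fin// leye_eq => /eqP -> /=.
  rewrite /=; lra.
case: B B0 hAB hBA => [b| |] //= B0 hAB hBA; last first.
  by move: hBA; rewrite gt0_muley ?lte_fin.
rewrite -!EFinM !lee_fin in hAB hBA; rewrite !lee_fin in A0 B0.
have [a0|a0] := leP a 0.
  have b0 : b <= 0.
    have : c * b <= 0 by exact: le_trans hBA a0.
    by rewrite pmulr_rle0.
  rewrite (ln0 a0) (ln0 b0); lra.
have cab : 0 < c * a by rewrite mulr_gt0.
have b0 : 0 < b by apply: lt_le_trans hAB.
rewrite lerBrDr addrC -lnM ?posrE//.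
by rewrite ler_ln ?posrE.
Qed.

Lemma fineM_pos (R : realType) (P : R) (A : \bar R) : 0 < P ->
  fine (P%:E * A)%E = P * fine A.
Proof.
move=> P0; case: A => [a| |] //=.
- by rewrite gt0_muley ?lte_fin// mulr0.
- by rewrite gt0_muleNy ?lte_fin// mulr0.
Qed.

Lemma cmpP (R : realType) (P C : R) (A B : \bar R) : 0 <= P -> 0 < C ->
  (A <= C%:E * B)%E -> ((C^-1)%:E * (P%:E * A) <= P%:E * B)%E.
Proof.
move=> P0 C0 hAB.
rewrite muleCA; apply: lee_wpmul2l; first by rewrite lee_fin.
apply: (le_trans (lee_wpmul2l _ hAB)); first by rewrite lee_fin invr_ge0 ltW.
by rewrite muleA -EFinM mulVf ?gt_eqF// mul1e.
Qed.

Lemma Eth_ge0 (R : realType) (d : nat) (eps : R) (x : d.-tuple R) : (0 <= Eth eps x)%E.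
Proof. by apply: esum_ge0 => k _; rewrite lee_fin expR_ge0. Qed.

Lemma scale_ineq (R : realType) (eps a b X Y : R) : 0 < eps -> a <= b + X ->
  eps * X = Y -> - eps * b <= - eps * a + Y.
Proof. move=> e0 h <-; have := ler_wpM2l (ltW e0) h; rewrite mulrDr; lra. Qed.

Lemma aux1 (R : realType) (p a b s : R) : a <= b + s -> p - b - s <= p - a.
Proof. lra. Qed.

Lemma ceps_cmp (R : realType) (d : nat) (eps : R) (z x y : d.-tuple R) :
  0 < eps -> ceps eps z x <= ceps eps z y + d%:R * pi ^+ 2 / 2.
Proof.
move=> heps.
set P := powR (2 * pi * eps) (- (d%:R / 2)).
have P0 : 0 < P by apply: powR_gt0; rewrite mulr_gt0// mulr_gt0// pi_gt0.
set C := expR (d%:R * (pi ^+ 2 / (2 * eps))).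
have C0 : 0 < C by exact: expR_gt0.
have C1 : C^-1 <= 1.
  rewrite invf_le1// /C -expR0 ler_expR; apply: mulr_ge0 => //.
  by apply: divr_ge0; rewrite ?sqr_ge0// mulr_ge0// ltW.
have lnC : ln (C^-1) = - (d%:R * (pi ^+ 2 / (2 * eps))).
  by rewrite lnV ?posrE// /C expRK.
have Ci0 : 0 < C^-1 by rewrite invr_gt0.
have h := @ln_fine_cmp R (P%:E * Eth eps (tdiff z y)) (P%:E * Eth eps (tdiff z x)) (C^-1)
  Ci0 C1
  (mule_ge0 (ltW P0 : (0 <= P%:E)%E) (Eth_ge0 _ _))
  (mule_ge0 (ltW P0 : (0 <= P%:E)%E) (Eth_ge0 _ _))
  (cmpP (ltW P0) C0 (Eth_cmp _ _ heps))
  (cmpP (ltW P0) C0 (Eth_cmp _ _ heps)).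
rewrite lnC opprK !fineM_pos// in h.
rewrite /ceps !Kheat_Eth -/P.
have e1 : eps * (d%:R * (pi ^+ 2 / (2 * eps))) = d%:R * pi ^+ 2 / 2.
  by field; rewrite gt_eqF.
exact: (scale_ineq heps h e1).
Qed.

Lemma T_cmp (R : realType) (d : nat) (mu : probability (d.-tuple R) R) (eps : R)
  (phi : d.-tuple R -> R) (x y : d.-tuple R) :
  0 < eps -> Teps mu eps phi x <= Teps mu eps phi y + d%:R * pi ^+ 2 / 2.
Proof.
move=> heps.
set S := d%:R * pi ^+ 2 / 2.
have S0 : 0 <= S by rewrite /S divr_ge0// mulr_ge0// sqr_ge0.
pose J := fun y => (\int[mu]_z (expR ((phi z - ceps eps z y) / eps))%:E)%E.
have J0 : forall y, (0 <= J y)%E.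
  by move=> w; apply: integral_ge0 => z _; rewrite lee_fin expR_ge0.
set c := expR (- (S / eps)).
have c0 : 0 < c by exact: expR_gt0.
have c1 : c <= 1 by rewrite /c expR_le1 oppr_le0 divr_ge0// ltW.
have hJ : forall x y, (c%:E * J y <= J x)%E.
  move=> x' y'.
  have h : (c%:E * J y' <= \int[mu]_z (c%:E * (expR ((phi z - ceps eps z y') / eps))%:E))%E.
    by apply: my_integralZ_ge => // z _; rewrite lee_fin expR_ge0.
  apply: (le_trans h); apply: my_le_integral.
    by move=> z _; rewrite -EFinM lee_fin mulr_ge0 ?expR_ge0// ltW.
  move=> z _; rewrite -EFinM lee_fin /c -expRD ler_expR.
  have -> : - (S / eps) + (phi z - ceps eps z y') / eps =
            (phi z - ceps eps z y' - S) / eps by rewrite [RHS]mulrBl addrC.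
  rewrite ler_pM2r ?invr_gt0//.
  exact: aux1 (ceps_cmp z x' y' heps).
have h := ln_fine_cmp c0 c1 (J0 y) (J0 x) (hJ x y) (hJ y x).
rewrite /c expRK opprK in h.
have e1 : eps * (S / eps) = S by rewrite mulrC divfK ?gt_eqF.
exact: (scale_ineq heps h e1).
Qed.

Lemma tint_ge0 (R : realType) (n : nat) (f : n.-tuple R -> \bar R) :
  (forall x, (0 <= f x)%E) -> (0 <= tint f)%E.
Proof.
elim: n f => [|n IH] f f0 /=; first exact: f0.
by apply: integral_ge0 => t _; apply: IH => x; exact: f0.
Qed.

Lemma tint_le (R : realType) (n : nat) (f g : n.-tuple R -> \bar R) :
  (forall x, (0 <= f x)%E) -> (forall x, (f x <= g x)%E) -> (tint f <= tint g)%E.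
Proof.
elim: n f g => [|n IH] f g f0 fg /=; first exact: fg.
apply: my_le_integral => t _; first by apply: tint_ge0 => x; exact: f0.
by apply: IH => x; [exact: f0 | exact: fg].
Qed.

Lemma tintZ_ge (R : realType) (n : nat) (f : n.-tuple R -> \bar R) (k : R) :
  0 < k -> (forall x, (0 <= f x)%E) ->
  (k%:E * tint f <= tint (fun x => k%:E * f x))%E.
Proof.
move=> k0; elim: n f => [|n IH] f f0 /=; first by [].
apply: (@le_trans _ _ (\int[lebesgue_measure]_(t in `[0%R, (2 * pi)%R[%classic)
    (k%:E * tint (fun x => f (cons_tuple t x))))%E).
  by apply: my_integralZ_ge => // t _; apply: tint_ge0 => x; exact: f0.
apply: my_le_integral => t _.
  by apply: mule_ge0; [rewrite lee_fin ltW | apply: tint_ge0 => x; exact: f0].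
by apply: IH => x; exact: f0.
Qed.

Lemma tint_lowb (R : realType) (n : nat) (f g : n.-tuple R -> \bar R) (k : R) :
  0 < k -> (forall x, (0 <= g x)%E) -> (forall x, (k%:E * g x <= f x)%E) ->
  (k%:E * tint g <= tint f)%E.
Proof.
move=> k0 g0 gf; apply: le_trans (tintZ_ge k0 g0) _.
apply: tint_le; last exact: gf.
by move=> x; apply: mule_ge0; [rewrite lee_fin ltW | exact: g0].
Qed.

Lemma tint_upb (R : realType) (n : nat) (f g : n.-tuple R -> \bar R) (k : R) :
  0 < k -> (forall x, (0 <= f x)%E) -> (forall x, (0 <= g x)%E) ->
  (forall x, (f x <= k%:E * g x)%E) -> (tint f <= k%:E * tint g)%E.
Proof.
move=> k0 f0 g0 fg.
have kg0 : forall x, (0 <= k%:E * g x)%E.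
  by move=> x; apply: mule_ge0; [rewrite lee_fin ltW | exact: g0].
apply: le_trans (tint_le f0 fg) _.
have ki0 : 0 < k^-1 by rewrite invr_gt0.
have h := tintZ_ge ki0 kg0.
have e : (fun x => (k^-1%:E * (k%:E * g x))%E) = g.
  by apply/funext => x; rewrite muleA -EFinM mulVf ?gt_eqF// mul1e.
rewrite e in h.
have := lee_wpmul2l (ltW k0 : (0 <= k%:E)%E) h.
by rewrite muleA -EFinM divff ?gt_eqF// mul1e.
Qed.

Lemma tdist_ge0 (R : realType) (d : nat) (x y : d.-tuple R) : 0 <= tdist x y.
Proof.
rewrite /tdist; apply: lb_le_inf.
  by exists (Num.sqrt (sqnorm_shift x y [ffun=> 0])); exists [ffun=> 0].
by move=> _ [k _ <-]; exact: sqrtr_ge0.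
Qed.

Lemma final_alg (R : realType) (nu N I Z V ey eT er m M a b ka kb : R) :
  0 < N -> 0 < m -> m <= nu -> nu <= M -> 0 < Z -> 0 < er -> er <= ey -> ey <= 1 ->
  er * V <= Z -> Z <= V -> 0 < eT -> 0 < a -> eT * a <= I -> I <= eT * b ->
  0 < ka -> ka <= a -> b <= kb ->
  m * (er * ka) * (V / N) <= (nu * 1 / N) / ((Z^-1 * ey * 1) * eT / I) /\
  (nu * 1 / N) / ((Z^-1 * ey * 1) * eT / I) <= M * (er^-1 * kb) * (V / N).
Proof.
move=> N0 m0 mnu nuM Z0 er0 erey ey1 erVZ ZV eT0 a0 Ia Ib ka0 kaa bkb.
have ey0 : 0 < ey by exact: lt_le_trans er0 erey.
have I0 : 0 < I by apply: lt_le_trans Ia; rewrite mulr_gt0.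
have V0 : 0 < V by exact: lt_le_trans Z0 ZV.
have nu0 : 0 < nu by exact: lt_le_trans m0 mnu.
have -> : (nu * 1 / N) / ((Z^-1 * ey * 1) * eT / I) = (nu / N) * (I / eT) * (Z / ey).
  by field; rewrite !gt_eqF.
have hIa : ka <= I / eT by rewrite ler_pdivlMr// mulrC (le_trans _ Ia)// ler_wpM2l// ltW.
have hIb : I / eT <= kb by rewrite ler_pdivrMr// mulrC (le_trans Ib)// ler_wpM2l// ltW.
have hZa : er * V <= Z / ey by rewrite ler_pdivlMr// (le_trans _ erVZ)// ler_piMr// mulr_ge0// ltW.
have hZb : Z / ey <= V / er.
  apply: (@le_trans _ _ (Z / er)).
    by rewrite ler_pM2l// lef_pV2 ?posrE.
  by rewrite ler_pM2r ?invr_gt0.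
split.
  have -> : m * (er * ka) * (V / N) = (m / N) * ka * (er * V) by field; rewrite gt_eqF.
  apply: ler_pM; [| |apply: ler_pM|exact hZa].
  - by rewrite mulr_ge0// ltW// divr_gt0.
  - by rewrite mulr_ge0// ltW.
  - by rewrite ltW// divr_gt0.
  - exact: ltW.
  - by rewrite ler_pM2r ?invr_gt0.
  - exact: hIa.
have -> : M * (er^-1 * kb) * (V / N) = (M / N) * kb * (V / er) by field; rewrite !gt_eqF.
apply: ler_pM; [| |apply: ler_pM|exact hZb].
- by rewrite mulr_ge0// ltW// divr_gt0.
- by rewrite divr_ge0// ltW.
- by rewrite ltW// divr_gt0.
- by rewrite divr_ge0// ltW.
- by rewrite ler_pM2r ?invr_gt0.
- exact: hIb.
Qed.

Lemma fine0_cases (R : realType) (x : \bar R) : (0 <= x)%E -> fine x = 0 ->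
  x = 0%E \/ x = +oo%E.
Proof. by case: x => [v| |] //= _ v0; [left; rewrite v0 | right]. Qed.

Lemma fine_pos (R : realType) (x : \bar R) : (0 <= x)%E -> fine x != 0 ->
  x = (fine x)%:E /\ 0 < fine x.
Proof.
case: x => [v| |] //=; last by rewrite eqxx.
by rewrite lee_fin => v0 vn0; split => //; rewrite lt_neqAle eq_sym vn0.
Qed.

Lemma fin_of_cle (R : realType) (c z : R) (v : \bar R) : 0 < c -> (0 <= v)%E ->
  (c%:E * v <= z%:E)%E -> v = (fine v)%:E.
Proof.
move=> c0; case: v => [v| |] //= _.
by rewrite gt0_muley ?lte_fin.
Qed.

Lemma fine0_of_cle0 (R : realType) (c : R) (v : \bar R) : 0 < c -> (0 <= v)%E ->
  (c%:E * v <= 0)%E -> fine v = 0.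
Proof.
move=> c0; case: v => [v| |] //=.
rewrite lee_fin -EFinM lee_fin => v0 h; apply/eqP; rewrite eq_le v0 andbT.
by rewrite -(pmulr_rle0 _ c0).
Qed.

Lemma fine0_of_yle (R : realType) (v : \bar R) : (+oo <= v)%E -> fine v = 0.
Proof. by case: v. Qed.

Lemma sandwich (R : realType) (l u : R) (H : \bar R) :
  (l%:E <= H)%E -> (H <= u%:E)%E -> H = (fine H)%:E /\ l <= fine H <= u.
Proof. by case: H => [h| |] //=; rewrite !lee_fin => -> ->. Qed.

Lemma aux2 (R : realType) (z e u v : R) : 0 <= z -> 0 <= e -> u <= v ->
  u * z * e <= v * (z * e * 1) * 1.
Proof.
move=> z0 e0 uv; rewrite !mulr1 -mulrA ler_wpM2r//; exact: mulr_ge0.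
Qed.

Lemma aux3 (R : realType) (z e u v : R) : 0 <= z -> 0 <= e -> u <= v ->
  u * (z * e * 1) * 1 <= v * z * e.
Proof.
move=> z0 e0 uv; rewrite !mulr1 -[v * z * e]mulrA ler_wpM2r//; exact: mulr_ge0.
Qed.

Lemma aux2' (R : realType) (z e u v : R) : u <= v -> 0 <= z -> 0 <= e ->
  (u * z) * (e * 1) <= v * (z * e * 1) * 1.
Proof.
move=> uv z0 e0; rewrite !mulr1 -!mulrA; apply: ler_wpM2r => //; exact: mulr_ge0.
Qed.

Lemma aux3' (R : realType) (z e u v : R) : u <= v -> 0 <= z -> 0 <= e ->
  u * (z * e * 1) * 1 <= (v * z) * (e * 1).
Proof.
move=> uv z0 e0; rewrite !mulr1 -!mulrA; apply: ler_wpM2r => //; exact: mulr_ge0.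
Qed.

Theorem lemma3p6 (R : realType) (d : nat)
    (mu : probability (d.-tuple R) R) (eps alpha Rr : R)
    (heps : 0 < eps) (halpha : 0 < alpha) (hR : 0 < Rr)
    (hconv : strongly_convex_on (tball (torigin R d) Rr)
               (fun x => tdist (torigin R d) x ^+ 2) alpha)
    (x0 : d.-tuple R) (r : R) (hr : r < Rr)
    (nu : d.-tuple R -> R) (m_nu M_nu : R)
    (hnu_per : torus_periodic nu) (hnu_meas : measurable_fun setT nu)
    (hnu_ge0 : forall x, 0 <= nu x)
    (hnu_1 : tint (fun x => (nu x)%:E) = 1%E)
    (hm : 0 < m_nu) (hmM : m_nu <= M_nu)
    (hnuQ : forall x, tball x0 r x -> m_nu <= nu x <= M_nu) :
  let Q := tball x0 r in
  let nuQmass := tintegral Q nu in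
  let nuQ := fun y => nu y * \1_Q y / nuQmass in
  forall phi : d.-tuple R -> R, torus_continuous phi ->
  forall y, Q y ->
    m_nu * expR (- (r ^+ 2 / alpha) - 4 * pi ^+ 2 * d%:R) * (tvol Q / nuQmass)
      <= nuQ y / gammaQphi mu eps alpha x0 r phi y
    /\ nuQ y / gammaQphi mu eps alpha x0 r phi y
      <= M_nu * expR (r ^+ 2 / alpha + 4 * pi ^+ 2 * d%:R) * (tvol Q / nuQmass).
Proof.
move=> Q N nuQ phi hphi y Qy.
rewrite /nuQ /gammaQphi /gammaQ /tvol /N /tintegral -/Q.
set Gt := tint (fun x => (expR (- tdist x0 x ^+ 2 / alpha) * \1_Q x)%:E).
set Vt := tint (fun x => (1 * \1_Q x)%:E).
set Nt := tint (fun x => (nu x * \1_Q x)%:E).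
set Z := fine Gt.
set T := Teps mu eps phi.
set K := 4 * pi ^+ 2 * d%:R.
pose S : R := d%:R * pi ^+ 2 / 2.
have pi0 : 0 <= pi ^+ 2 :> R by exact: sqr_ge0.
have SK : S <= K.
  have h : 0 <= d%:R * pi ^+ 2 :> R by rewrite mulr_ge0.
  rewrite /S /K; lra.
have indQ : forall x, (Q x /\ \1_Q x = 1 :> R) \/ (\1_Q x = 0 :> R).
  move=> x; rewrite indicE; case: (boolP (x \in Q)) => xQ; last by right.
  by left; split => //; exact: set_mem.
have Iy : \1_Q y = 1 :> R by rewrite indicE mem_set.
have hd : forall x, Q x -> 0 <= tdist x0 x < r.
  by move=> x Qx; rewrite tdist_ge0.
have r0 : 0 < r by case/andP: (hd y Qy) => h1 h2; exact: le_lt_trans h1 h2.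
set er := expR (- r ^+ 2 / alpha).
have er0 : 0 < er by exact: expR_gt0.
have eb : forall x, Q x -> er <= expR (- tdist x0 x ^+ 2 / alpha) <= 1.
  move=> x Qx; case/andP: (hd x Qx) => h1 h2; apply/andP; split.
    by rewrite ler_expR ler_pM2r ?invr_gt0// lerN2 ler_sqr ?nnegrE ?(ltW r0) ?(ltW h2).
  by rewrite expR_le1 mulNr oppr_le0 divr_ge0 ?sqr_ge0 ?ltW.
have gnn : forall x, (0 <= (expR (- tdist x0 x ^+ 2 / alpha) * \1_Q x)%:E)%E.
  by move=> x; case: (indQ x) => [[_ ->]|->]; rewrite lee_fin ?mulr1 ?mulr0 ?expR_ge0.
have vnn : forall x : d.-tuple R, (0 <= ((1 : R) * \1_Q x)%:E)%E.
  by move=> x; case: (indQ x) => [[_ ->]|->]; rewrite lee_fin ?mulr1 ?mulr0.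
have Gt0 : (0 <= Gt)%E by apply: tint_ge0.
have Vt0 : (0 <= Vt)%E by apply: tint_ge0.
have Nt0 : (0 <= Nt)%E.
  by apply: tint_ge0 => x; rewrite lee_fin mulr_ge0//; case: (indQ x) => [[_ ->]|->].
have hGV1 : (er%:E * Vt <= Gt)%E.
  apply: tint_lowb => // x; rewrite -EFinM lee_fin.
  case: (indQ x) => [[Qx ->]|->]; last by rewrite !mulr0.
  by rewrite !mulr1; case/andP: (eb x Qx).
have hGV2 : (Gt <= Vt)%E.
  apply: tint_le => // x; rewrite lee_fin.
  case: (indQ x) => [[Qx ->]|->]; last by rewrite !mulr0.
  by rewrite !mulr1; case/andP: (eb x Qx).
have [Z0|Z0] := eqVneq Z 0.
  have V0 : fine Vt = 0.
    case: (fine0_cases Gt0 Z0) => hG.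
      by apply: (fine0_of_cle0 er0 Vt0); rewrite -hG.
    by apply: fine0_of_yle; rewrite -hG.
  rewrite Z0 V0 invr0 !(mul0r, mulr0, invr0).
  by split.
have [GtE Zpos] := fine_pos Gt0 Z0.
rewrite -/Z in GtE Zpos.
have hGV1' : (er%:E * Vt <= Z%:E)%E by rewrite -GtE.
have VtE := fin_of_cle er0 Vt0 hGV1'.
set V := fine Vt.
rewrite VtE GtE in hGV1 hGV2.
rewrite -EFinM lee_fin in hGV1.
rewrite lee_fin in hGV2.
set H := tint (fun x => (expR (T x) * _ * \1_Q x)%:E).
set eT := expR (T y).
have hTb : forall x, eT * expR (- S) <= expR (T x) <= eT * expR S.
  move=> x; rewrite /eT -!expRD !ler_expR; apply/andP; split.
    by rewrite lerBlDr; exact: T_cmp.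
  exact: T_cmp.
have Zi0 : 0 <= Z^-1 by rewrite invr_ge0 ltW.
have hH1 : ((eT * expR (- S) * Z^-1)%:E * Gt <= H)%E.
  apply: tint_lowb => //; first by rewrite !mulr_gt0 ?expR_gt0 ?invr_gt0.
  move=> x; rewrite -EFinM lee_fin.
  case: (indQ x) => [[Qx ->]|->]; last by rewrite !mulr0.
  apply: aux2' => //; first by case/andP: (hTb x).
have hH2 : (H <= (eT * expR S * Z^-1)%:E * Gt)%E.
  apply: tint_upb => //; first by rewrite !mulr_gt0 ?expR_gt0 ?invr_gt0.
    move=> x; rewrite lee_fin.
    case: (indQ x) => [[Qx ->]|->]; last by rewrite !mulr0.
    rewrite !mulr1; apply: mulr_ge0; [exact: expR_ge0|].
    by rewrite mulr_ge0 ?expR_ge0.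
  move=> x; rewrite -EFinM lee_fin.
  case: (indQ x) => [[Qx ->]|->]; last by rewrite !mulr0.
  apply: aux3' => //; first by case/andP: (hTb x).
rewrite GtE -EFinM divfK ?gt_eqF// in hH1.
rewrite GtE -EFinM divfK ?gt_eqF// in hH2.
have [HE /andP[Ha Hb]] := sandwich hH1 hH2.
set I := fine H in Ha Hb HE *.
have Nn0 : 0 <= fine Nt by exact: fine_ge0.
have [Nz|Npos] := eqVneq (fine Nt) 0.
  by rewrite Nz invr0 !(mul0r, mulr0); split.
have Npos' : 0 < fine Nt by rewrite lt_neqAle eq_sym Npos.
rewrite Iy.
have -> : expR (- (r ^+ 2 / alpha) - K) = er * expR (- K) by rewrite /er -expRD mulNr.
have -> : expR (r ^+ 2 / alpha + K) = er^-1 * expR K by rewrite /er -expRN -expRD mulNr opprK.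
case/andP: (hnuQ y Qy) => mnu nuM.
case/andP: (eb y Qy) => ery ey1.
apply: (final_alg (a := expR (- S)) (b := expR S)) => //.
all: try exact: expR_gt0.
  by rewrite ler_expR lerN2.
by rewrite ler_expR.
Qed.
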